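(* Let $r,p\ge0$ with $r+2p=n$, and $\mathbf t=(t_1,\dots,t_p)\in\mathbb C^p$ with all $t_i\ne0$. On the $W^n$-module $S(\mathbf t,0)$ all $u_k(1)$ act by zero, and $u_k(0)$ acts by $0$ if $k$ is odd or $k>2p$, and by the scalar $\sigma_{k/2}(t_1,\dots,t_p)$ if $k$ is even, where $\sigma_a$ is the $a$-th elementary symmetric polynomial.
   Context: For $m\ge0$, $U(\mathfrak h_m)$ is the superalgebra generated by odd $\xi_1,\dots,\xi_m$ with $\xi_i\xi_j+\xi_j\xi_i=0$ ($i\ne j$), $x_i=\xi_i^2$; it is the enveloping algebra of the Cartan subalgebra of $Q(m)$. $W^m\subset U(\mathfrak h_m)$ is the principal finite $W$-algebra of $Q(m)$ realized via the injective Harish-Chandra homomorphism, generated by $u_k(0),u_k(1)$ ($1\le k\le m$), the even and odd parts of $\sum_{1\le i_1<\dots<i_k\le m}\prod_{j=1}^{k}(x_{i_j}+(-1)^{k-j}\xi_{i_j})$ (ordered product). $W^2$ is generated by $\phi_0=\xi_1+\xi_2$, $\phi_1=x_2\xi_1-x_1\xi_2$, $z_0=x_1+x_2$, $z_1'=x_1x_2-\xi_1\xi_2$; $\Gamma_t$ is the $(1|0)$-dimensional $W^2$-module with $\phi_0,\phi_1,z_0$ acting by $0$ and $z_1'$ by $t$. The trivial $W^r$-module $\mathbb C$ is the restriction of the even one-dimensional $U(\mathfrak h_r)$-module on which all $\xi_i$ act by $0$. Via $U(\mathfrak h_n)\cong U(\mathfrak h_r)\otimes U(\mathfrak h_2)^{\otimes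 p}$ (super tensor product, consecutive blocks of $\xi$'s to successive factors) one has $W^n\subset W^r\otimes(W^2)^{\otimes p}$, and $S(\mathbf t,0)$ is the restriction to $W^n$ of the one-dimensional module $\mathbb C\otimes\Gamma_{t_1}\otimes\dots\otimes\Gamma_{t_p}$. *)

(* Defs.v *)
From HB Require Import structures.
From mathcomp Require Import all_boot all_order all_algebra all_field.
From mathcomp Require Import mpoly.
Set Implicit Arguments. Unset Strict Implicit. Unset Printing Implicit Defensive.
Import GRing.Theory.
Local Open Scope ring_scope.

(* Concrete model of U(h_m): an element is sum_S f(S) xi_S, where S ranges over
   subsets of {0..m-1}, xi_S = xi_{s_1} ... xi_{s_a} (s_1 < ... < s_a), and the
   coefficients f(S) are polynomials in the central even variables x_i = xi_i^2.
   The ground field C is algC. *)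
Definition Uh (m : nat) := {ffun {set 'I_m} -> {mpoly algC[m]}}.

Section Uh_ops.
Variable m : nat.

(* xi_S xi_T = uh_sign S T * (prod_{i in S cap T} x_i) * xi_{S symdiff T} *)
Definition uh_sign (S T : {set 'I_m}) : algC :=
  (-1) ^+ #|[set st : 'I_m * 'I_m | [&& st.1 \in S, st.2 \in T & (st.2 < st.1)%N]]|.

Definition uh_mul (f g : Uh m) : Uh m :=
  [ffun U => \sum_(S : {set 'I_m})
      \sum_(T : {set 'I_m} | (S :\: T) :|: (T :\: S) == U)
        uh_sign S T *: ((\prod_(i in S :&: T) 'X_i) * f S * g T)].

Definition uh_one : Uh m := [ffun S => (S == set0)%:R].
Definition uh_xi (i : 'I_m) : Uh m := [ffun S => (S == [set i])%:R].
Definition uh_x (i : 'I_m) : Uh m := [ffun S => (S == set0)%:R * 'X_i].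

(* versions indexed by a natural number (0-based); only used for i < m *)
Definition uh_xiN (i : nat) : Uh m :=
  match (insub i : option 'I_m) with Some j => uh_xi j | None => 0 end.
Definition uh_xN (i : nat) : Uh m :=
  match (insub i : option 'I_m) with Some j => uh_x j | None => 0 end.

(* even and odd parts (parity of xi_S is |S| mod 2, the x_i are even) *)
Definition uh_even (f : Uh m) : Uh m := [ffun S : {set 'I_m} => if odd #|S| then 0 else f S].
Definition uh_odd (f : Uh m) : Uh m := [ffun S : {set 'I_m} => if odd #|S| then f S else 0].

Definition uh_prod (s : seq 'I_m) (F : 'I_m -> Uh m) : Uh m :=
  foldr (fun i acc => uh_mul (F i) acc) uh_one s.

(* the j-th factor (j = 1 + position of i in the increasing enumeration of A)
   x_i + (-1)^(k-j) xi_i *)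
Definition u_factor (A : {set 'I_m}) (k : nat) (i : 'I_m) : Uh m :=
  uh_x i + ((-1) ^+ (k - (index i (enum A)).+1) : algC) *: uh_xi i.

Definition u_on (I : {set 'I_m}) (k : nat) : Uh m :=
  \sum_(A : {set 'I_m} | (A \subset I) && (#|A| == k)) uh_prod (enum A) (u_factor A k).

(* u_k(0), u_k(1) of W^m: even and odd parts of the full sum *)
Definition u0 (k : nat) : Uh m := uh_even (u_on setT k).
Definition u1 (k : nat) : Uh m := uh_odd (u_on setT k).

Inductive subalg (G : Uh m -> Prop) : Uh m -> Prop :=
| sa_gen g : G g -> subalg G g
| sa_one : subalg G uh_one
| sa_add a b : subalg G a -> subalg G b -> subalg G (a + b)
| sa_scale (c : algC) a : subalg G a -> subalg G (c *: a)
| sa_mul a b : subalg G a -> subalg G b -> subalg G (uh_mul a b).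

(* chi is a character (unital algebra homomorphism to C) of subalg G;
   this is exactly the datum of a (1|0)-dimensional module over subalg G *)
Definition char_on (G : Uh m -> Prop) (chi : Uh m -> algC) : Prop :=
  [/\ chi uh_one = 1,
      forall a b, subalg G a -> subalg G b -> chi (a + b) = chi a + chi b,
      forall c a, subalg G a -> chi (c *: a) = c * chi a &
      forall a b, subalg G a -> subalg G b -> chi (uh_mul a b) = chi a * chi b].

(* generators of the j-th copy of W^2, living in the variables a, a+1 *)
Definition phi0 (a : nat) : Uh m := uh_xiN a + uh_xiN a.+1.
Definition phi1 (a : nat) : Uh m :=
  uh_mul (uh_xN a.+1) (uh_xiN a) - uh_mul (uh_xN a) (uh_xiN a.+1).
Definition z0 (a : nat) : Uh m := uh_xN a + uh_xN a.+1.
Definition z1' (a : nat) : Uh m :=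
  uh_mul (uh_xN a) (uh_xN a.+1) - uh_mul (uh_xiN a) (uh_xiN a.+1).

Definition first_vars (r : nat) : {set 'I_m} := [set i : 'I_m | (i < r)%N].

(* generators of W^r (x) (W^2)^{(x) p}, embedded in U(h_m) = U(h_r) (x) U(h_2)^{(x)p}
   (consecutive blocks of variables) *)
Definition blockW_gens (r p : nat) : Uh m -> Prop := fun g =>
  (exists k, g = uh_even (u_on (first_vars r) k) \/ g = uh_odd (u_on (first_vars r) k))
  \/ (exists j : 'I_p, let a := (r + 2 * j)%N in
        [\/ g = phi0 a, g = phi1 a, g = z0 a | g = z1' a]).

(* chi is the character of the one-dimensional module C (x) Gamma_{t_1} (x) ... (x) Gamma_{t_p}
   of W^r (x) (W^2)^{(x)p}: trivial module on W^r (restriction of the U(h_r)-module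
   where all xi_i act by 0, i.e. evaluation of the constant term), and on the j-th
   copy of W^2: phi0, phi1, z0 act by 0 and z1' by t_j. *)
Definition S_t0_char (r p : nat) (t : 'I_p -> algC) (chi : Uh m -> algC) : Prop :=
  [/\ char_on (blockW_gens r p) chi,
      forall k, chi (uh_even (u_on (first_vars r) k))
                = mcoeff 0%MM (uh_even (u_on (first_vars r) k) set0),
      forall k, chi (uh_odd (u_on (first_vars r) k))
                = mcoeff 0%MM (uh_odd (u_on (first_vars r) k) set0) &
      forall j : 'I_p, let a := (r + 2 * j)%N in
        [/\ chi (phi0 a) = 0, chi (phi1 a) = 0, chi (z0 a) = 0 & chi (z1' a) = t j]].

End Uh_ops.

Definition esym_t (p : nat) (t : 'I_p -> algC) (a : nat) : algC :=
  \sum_(A : {set 'I_p} | #|A| == a) \prod_(i in A) t i.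

(* Main.v *)
Require Import Defs.
From HB Require Import structures.
From mathcomp Require Import all_boot all_order all_algebra all_field.
From mathcomp Require Import mpoly.
From mathcomp Require Import zify.
Set Implicit Arguments. Unset Strict Implicit. Unset Printing Implicit Defensive.
Import GRing.Theory Num.Theory.
Local Open Scope ring_scope.

Section Basic.
Variable m : nat.
Implicit Types f g h : Uh m.

Lemma uh_mulDl f1 f2 g : uh_mul (f1 + f2) g = uh_mul f1 g + uh_mul f2 g.
Proof.
apply/ffunP => U; rewrite !ffunE -big_split; apply: eq_bigr => S _.
rewrite -big_split; apply: eq_bigr => T _.
by rewrite ffunE mulrDr mulrDl scalerDr.
Qed.

Lemma uh_mulDr f g1 g2 : uh_mul f (g1 + g2) = uh_mul f g1 + uh_mul f g2.
Proof.
apply/ffunP => U; rewrite !ffunE -big_split; apply: eq_bigr => S _.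
rewrite -big_split; apply: eq_bigr => T _.
by rewrite ffunE mulrDr scalerDr.
Qed.

Lemma uh_mulZl c f g : uh_mul (c *: f) g = c *: uh_mul f g.
Proof.
apply/ffunP => U; rewrite !ffunE scaler_sumr; apply: eq_bigr => S _.
rewrite scaler_sumr; apply: eq_bigr => T _.
by rewrite ffunE -scalerAr -scalerAl !scalerA mulrC.
Qed.

Lemma uh_mulZr c f g : uh_mul f (c *: g) = c *: uh_mul f g.
Proof.
apply/ffunP => U; rewrite !ffunE scaler_sumr; apply: eq_bigr => S _.
rewrite scaler_sumr; apply: eq_bigr => T _.
by rewrite ffunE -scalerAr !scalerA mulrC.
Qed.

Lemma uh_mul0l g : uh_mul 0 g = 0.
Proof. by have := uh_mulZl 0 0 g; rewrite !scale0r. Qed.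
Lemma uh_mul0r f : uh_mul f 0 = 0.
Proof. by have := uh_mulZr 0 f 0; rewrite !scale0r. Qed.

Lemma uh_mul_suml I (r : seq I) (P : pred I) (F : I -> Uh m) g :
  uh_mul (\sum_(i <- r | P i) F i) g = \sum_(i <- r | P i) uh_mul (F i) g.
Proof.
by apply: (big_morph (fun f => uh_mul f g)) => [f1 f2|]; rewrite ?uh_mulDl ?uh_mul0l.
Qed.
Lemma uh_mul_sumr I (r : seq I) (P : pred I) (F : I -> Uh m) f :
  uh_mul f (\sum_(i <- r | P i) F i) = \sum_(i <- r | P i) uh_mul f (F i).
Proof.
by apply: (big_morph (fun g => uh_mul f g)) => [f1 f2|]; rewrite ?uh_mulDr ?uh_mul0r.
Qed.

Implicit Types S T U B C A I : {set 'I_m}.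

Definition supp f B := forall S, ~~ (S \subset B) -> f S = 0.
Definition before B C := forall i j, i \in B -> j \in C -> (i < j)%N.

Lemma sign_before S T : before S T -> uh_sign S T = 1.
Proof.
move=> bST; rewrite /uh_sign.
suff -> : [set st : 'I_m * 'I_m | [&& st.1 \in S, st.2 \in T & (st.2 < st.1)%N]] = set0.
  by rewrite cards0 expr0.
apply/setP => -[a b]; rewrite !inE /=; apply/negP => /and3P [aS bT ba].
by have := bST _ _ aS bT; rewrite ltnNge (ltnW ba).
Qed.

Lemma before_disj B C x : before B C -> x \in B -> x \in C -> False.
Proof. by move=> h xB xC; have := h _ _ xB xC; rewrite ltnn. Qed.

Lemma cond_before B C S T U : before B C -> S \subset B -> T \subset C ->
  (S :|: T == U) = [&& S == U :&: B, T == U :&: C & U \subset B :|: C].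
Proof.
move=> bBC sB tC; apply/idP/idP.
  move/eqP <-; apply/and3P; split; last by rewrite setUSS.
    apply/eqP/setP => x; rewrite !inE.
    have := @before_disj B C x bBC; have h1 := subsetP sB x; have h2 := subsetP tC x.
    by case: (x \in S) h1 => [->//|_]; case: (x \in T) h2 => [->//|_];
       case: (x \in B) => //; case: (x \in C) => // H; case: H.
  apply/eqP/setP => x; rewrite !inE.
  have := @before_disj B C x bBC; have h1 := subsetP sB x; have h2 := subsetP tC x.
  by case: (x \in S) h1 => [->//|_]; case: (x \in T) h2 => [->//|_];
     case: (x \in B) => //; case: (x \in C) => // H; case: H.
case/and3P => /eqP -> /eqP -> /subsetP hU; apply/eqP/setP => x; rewrite !inE.
have := hU x; rewrite !inE.
by case: (x \in U) => //= /(_ isT); case: (x \in B); case: (x \in C).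
Qed.

Lemma big_ifeq (I : finType) (j : I) (F : I -> {mpoly algC[m]}) :
  \sum_i (if i == j then F i else 0) = F j.
Proof. by rewrite -big_mkcond big_pred1_eq. Qed.

Lemma BM f g B C : supp f B -> supp g C -> before B C ->
  forall U, uh_mul f g U = if U \subset B :|: C then f (U :&: B) * g (U :&: C) else 0.
Proof.
move=> hf hg bBC U; rewrite ffunE.
transitivity (\sum_(S : {set 'I_m}) \sum_(T : {set 'I_m})
   (if (S == U :&: B) then (if (T == U :&: C) then
      (if U \subset B :|: C then f S * g T else 0) else 0) else 0)).
  apply: eq_bigr => S _; rewrite big_mkcond; apply: eq_bigr => T _.
  have [sB|nsB] := boolP (S \subset B); last first.
    rewrite hf // mulr0 mul0r scaler0 if_same.
    case: eqP => // eS; move: nsB; rewrite eS subsetIr //.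
  have [tC|ntC] := boolP (T \subset C); last first.
    rewrite hg // mulr0 scaler0 if_same.
    case: eqP => // eS; case: eqP => // eT; move: ntC; rewrite eT subsetIr //.
  have bST : before S T by move=> i j iS jT; apply: bBC; [apply: (subsetP sB) | apply: (subsetP tC)].
  rewrite sign_before // scale1r.
  have -> : S :&: T = set0.
    by apply/setP => x; rewrite !inE; apply/negP => /andP [xS xT]; apply: (before_disj bST xS xT).
  rewrite big_set0 mul1r.
  have -> : (S :\: T) :|: (T :\: S) = S :|: T.
    apply/setP => x; rewrite !inE; have := @before_disj S T x bST.
    by case: (x \in S); case: (x \in T) => // H; case: H.
  rewrite (cond_before U bBC sB tC).
  by case: (S == _); case: (T == _); case: (U \subset _).
rewrite (bigD1 (U :&: B)) //= eqxx (bigD1 (U :&: C)) //= eqxx.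
rewrite big1 ?addr0; last by move=> T /negbTE ->.
rewrite big1 ?addr0 //; move=> S /negbTE ->; exact: big1.
Qed.


Lemma supp_one B : supp (uh_one m) B.
Proof. move=> S nS; rewrite ffunE; case: eqP => // eS; by move: nS; rewrite eS sub0set. Qed.

Lemma supp_xi i B : i \in B -> supp (uh_xi i) B.
Proof.
move=> iB S nS; rewrite ffunE.
have -> : (S == [set i]) = false by apply/negP => /eqP eS; move: nS; rewrite eS sub1set iB.
by [].
Qed.

Lemma supp_x i B : supp (uh_x i) B.
Proof.
move=> S nS; rewrite ffunE.
have -> : (S == set0) = false by apply/negP => /eqP eS; move: nS; rewrite eS sub0set.
by rewrite mul0r.
Qed.

Lemma supp_add f g B : supp f B -> supp g B -> supp (f + g) B.
Proof. by move=> hf hg S nS; rewrite ffunE hf // hg // addr0. Qed.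

Lemma supp_scale c f B : supp f B -> supp (c *: f) B.
Proof. by move=> hf S nS; rewrite ffunE hf // scaler0. Qed.

Lemma supp_sub f B B' : B \subset B' -> supp f B -> supp f B'.
Proof. move=> sBB hf S nS; apply: hf; apply: contra nS => h; exact: subset_trans sBB. Qed.

Lemma supp_mul f g B C : supp f B -> supp g C -> supp (uh_mul f g) (B :|: C).
Proof.
move=> hf hg U nU; rewrite ffunE big1 // => S _; rewrite big1 // => T /eqP eU.
have [sB|nsB] := boolP (S \subset B); last by rewrite hf // mulr0 mul0r scaler0.
have [tC|ntC] := boolP (T \subset C); last by rewrite hg // mulr0 scaler0.
exfalso; move/negP: nU; apply; rewrite -eU; apply/subsetP => x; rewrite !inE.
by move=> /orP[/andP[_ xS]|/andP[_ xT]]; [rewrite (subsetP sB) | rewrite (subsetP tC) ?orbT].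
Qed.

Lemma supp_T f : supp f setT.
Proof. by move=> S; rewrite subsetT. Qed.

Lemma before0r B : before B set0.
Proof. by move=> i j _; rewrite inE. Qed.
Lemma before0l B : before set0 B.
Proof. by move=> i j; rewrite inE. Qed.

Lemma mul_supp0r f g U : supp g set0 -> uh_mul f g U = f U * g set0.
Proof.
move=> hg; rewrite (BM (supp_T f) hg (@before0r setT)) setU0 subsetT.
by rewrite setIT setI0.
Qed.

Lemma mul_supp0l f g U : supp f set0 -> uh_mul f g U = f set0 * g U.
Proof.
move=> hf; rewrite (BM hf (supp_T g) (@before0l setT)) set0U subsetT.
by rewrite setIT setI0.
Qed.

Lemma uh_mul1r g : uh_mul (uh_one m) g = g.
Proof. apply/ffunP => U; rewrite mul_supp0l; last exact: supp_one. by rewrite /uh_one ffunE eqxx mul1r. Qed.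
Lemma uh_mulr1 f : uh_mul f (uh_one m) = f.
Proof. apply/ffunP => U; rewrite mul_supp0r; last exact: supp_one. by rewrite /uh_one ffunE eqxx mulr1. Qed.

Lemma uh_mul_comm0 f g : supp g set0 -> uh_mul f g = uh_mul g f.
Proof. by move=> hg; apply/ffunP => U; rewrite mul_supp0r // mul_supp0l // mulrC. Qed.

Definition ltv := relpre (@nat_of_ord m) ltn.

Lemma ltv_trans : transitive ltv.
Proof. by move=> a b c; apply: ltn_trans. Qed.

Lemma CF (s : seq 'I_m) (F : 'I_m -> Uh m) : sorted ltv s ->
  (forall i, supp (F i) [set i]) -> forall U,
  uh_prod s F U = if U \subset [set x in s] then
     \prod_(i <- s) F i (if i \in U then [set i] else set0) else 0.
Proof.
move=> + hF; elim: s => [|i s IH] hs U.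
  have -> : [set x in ([::] : seq 'I_m)] = set0 by apply/setP => x; rewrite !inE.
  rewrite /= /uh_one ffunE subset0 big_nil. by case: (U == set0).
have hs' : sorted ltv s := path_sorted hs.
have hall := order_path_min ltv_trans hs.
have suppP : supp (uh_prod s F) [set x in s].
  by move=> S nS; rewrite IH // (negbTE nS).
rewrite /= (BM (hF i) suppP).
  have -> : [set x in i :: s] = [set i] :|: [set x in s].
    by apply/setP => x; rewrite !inE.
  case: ifP => // _; rewrite IH // subsetIr big_cons; congr (_ * _).
    congr (F i _); apply/setP => x; rewrite !inE.
    by case: ifP => iU; rewrite ?inE; case: eqP => [->|]; rewrite ?iU ?andbF ?andbT.
  apply: eq_big_seq => j js; congr (F j _); by rewrite !inE js andbT.
move=> a b; rewrite !inE => /eqP -> bs.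
by have := allP hall b bs.
Qed.

Lemma sorted_enum_set (A : {set 'I_m}) : sorted ltv (enum A).
Proof.
rewrite /ltv -sorted_map.
rewrite -[enum _](eq_filter (mem_enum _)).
rewrite -(eq_filter (mem_map val_inj _)) -filter_map.
by rewrite (sorted_filter ltn_trans) // unlock val_ord_enum iota_ltn_sorted.
Qed.


Lemma set1_ne0 (i : 'I_m) : ([set i] == set0) = false.
Proof. apply/negP => /eqP h; by have := in_set1 i i; rewrite h inE eqxx. Qed.

Definition cnt A (i : 'I_m) := #|[set a in A | (i < a)%N]|.
Definition fac A (c : nat) (i : 'I_m) : Uh m := uh_x i + ((-1) ^+ (c + cnt A i) : algC) *: uh_xi i.
Definition PP A (c : nat) := uh_prod (enum A) (fac A c).
Definition v I (k c : nat) := \sum_(A : {set 'I_m} | (A \subset I) && (#|A| == k)) PP A c.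

Lemma supp_fac A c i : supp (fac A c i) [set i].
Proof. by apply: supp_add; [apply: supp_x | apply/supp_scale/supp_xi; rewrite inE]. Qed.

Definition sgn (e : nat) : {mpoly algC[m]} := ((-1) ^+ e : algC) *: 1.

Lemma fac_val A c i (U : {set 'I_m}) :
  fac A c i (if i \in U then [set i] else set0) =
  if i \in U then sgn (c + cnt A i) else 'X_i.
Proof.
rewrite /fac !ffunE; case: ifP => _.
  by rewrite set1_ne0 eqxx mul0r add0r.
by rewrite eqxx eq_sym set1_ne0 mul1r scaler0 addr0.
Qed.

Lemma PP_coef A c U : PP A c U = if U \subset A then
  \prod_(i in A) (if i \in U then sgn (c + cnt A i) else 'X_i) else 0.
Proof.
rewrite /PP CF ?sorted_enum_set //; last exact: supp_fac.
rewrite set_enum big_enum; case: ifP => // _.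
by apply: eq_bigr => i _; rewrite fac_val.
Qed.

Lemma supp_PP A c : supp (PP A c) A.
Proof. by move=> S nS; rewrite PP_coef (negbTE nS). Qed.

Lemma uh_prod_eq_in (s : seq 'I_m) (F G : 'I_m -> Uh m) :
  {in s, F =1 G} -> uh_prod s F = uh_prod s G.
Proof.
elim: s => //= a s IH h; rewrite h ?mem_head // IH // => x xs.
by apply: h; rewrite inE xs orbT.
Qed.

Lemma index_sorted (s : seq 'I_m) (i : 'I_m) : sorted ltv s -> i \in s ->
  index i s = count (fun a : 'I_m => (a < i)%N) s.
Proof.
elim: s => //= a s IH hs.
have hall := order_path_min ltv_trans hs.
have hs' : sorted ltv s := path_sorted hs.
rewrite inE; have [<-|ne] := eqVneq a i => /= H.
  rewrite ltnn add0n (eq_in_count (a2 := pred0)) ?count_pred0 // => x xs.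
  by have := allP hall x xs; rewrite /ltv /= => h; apply/negbTE; rewrite -leqNgt ltnW.
have ai : (a < i)%N := allP hall i H.
by rewrite IH // ai add1n.
Qed.

Lemma count3 (s : seq 'I_m) (i : 'I_m) :
  (count (fun a : 'I_m => (a < i)%N) s + count (fun a : 'I_m => (i < a)%N) s
   + count (pred1 i) s = size s)%N.
Proof.
elim: s => //= a s IH.
have [lt|gt|eq] := ltngtP a i.
- have h1 : (i < a)%N = false by rewrite ltnNge ltnW.
  have h2 : (a == i) = false by apply/negbTE; rewrite -val_eqE /= neq_ltn lt.
  rewrite h2 /=; lia.
- have h1 : (a < i)%N = false by rewrite ltnNge ltnW.
  have h2 : (a == i) = false by apply/negbTE; rewrite -val_eqE /= neq_ltn gt orbT.
  rewrite h2 /=; lia.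
- have h2 : (a == i) = true by apply/eqP/val_inj.
  rewrite h2 /=; lia.
Qed.

Lemma cnt_count A i : cnt A i = count (fun a : 'I_m => (i < a)%N) (enum A).
Proof.
rewrite /cnt -sum1_count big_enum_cond -sum1_card.
by apply: eq_bigl => x; rewrite !inE.
Qed.

Lemma u_on_v I k : u_on I k = v I k 0.
Proof.
apply: eq_bigr => A /andP [_ /eqP cA].
apply: uh_prod_eq_in => i; rewrite mem_enum => iA.
rewrite /u_factor /fac add0n; congr (_ + _ *: _); congr ((-1) ^+ _).
have h3 := count3 (enum A) i.
rewrite count_uniq_mem ?enum_uniq // mem_enum iA -cardE cA in h3.
rewrite index_sorted ?sorted_enum_set ?mem_enum // cnt_count.
lia.
Qed.


Lemma big_ifeqG (V : nmodType) (J : finType) (j : J) (F : J -> V) :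
  \sum_i (if i == j then F i else 0) = F j.
Proof. by rewrite -big_mkcond big_pred1_eq. Qed.

Lemma before_sub B C B' C' : before B C -> B' \subset B -> C' \subset C -> before B' C'.
Proof. by move=> h sB sC i j iB jC; apply: h; [apply: (subsetP sB) | apply: (subsetP sC)]. Qed.

Lemma before_disjoint B C : before B C -> [disjoint B & C].
Proof. move=> h; rewrite disjoint_subset; apply/subsetP => x xB; rewrite !inE; apply/negP => xC; exact: (before_disj h xB xC). Qed.

Lemma card_before B C : before B C -> #|B :|: C| = (#|B| + #|C|)%N.
Proof. by move=> h; rewrite cardsU (disjoint_setI0 (before_disjoint h)) cards0 subn0. Qed.

Lemma PP_union B C A1 A2 c : before B C -> A1 \subset B -> A2 \subset C ->
  uh_mul (PP A1 (c + #|A2|)) (PP A2 c) = PP (A1 :|: A2) c.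
Proof.
move=> bBC s1 s2; have bA := before_sub bBC s1 s2.
apply/ffunP => U; rewrite (BM (@supp_PP A1 _) (@supp_PP A2 _) bA) !PP_coef.
case: ifP => // _; rewrite !subsetIr.
rewrite [RHS](eq_bigl [predU A1 & A2]) => [|i]; last by rewrite !inE.
rewrite bigU ?before_disjoint //; congr (_ * _).
  apply: eq_bigr => i iA1; rewrite inE iA1 andbT; case: ifP => // _.
  congr sgn; rewrite -addnA; congr (_ + _)%N; rewrite /cnt.
  have -> : [set a in A1 :|: A2 | (i < a)%N] = [set a in A1 | (i < a)%N] :|: A2.
    apply/setP => x; rewrite !inE; case: (boolP (x \in A2)) => xA2.
      by rewrite !orbT andTb (bA _ _ iA1 xA2).
    by rewrite !orbF.
  rewrite card_before 1?addnC //; apply: before_sub bA _ (subxx _).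
  by apply/subsetP => x; rewrite inE => /andP[].
apply: eq_bigr => i iA2; rewrite inE iA2 andbT; case: ifP => // _.
congr sgn; congr (_ + _)%N; rewrite /cnt; apply: eq_card => x; rewrite !inE; case: (boolP (x \in A1)) => xA1 //=.
have h := bA _ _ xA1 iA2; by rewrite ltnNge (ltnW h) andbF.
Qed.


Lemma split_point B C k c A A1 A2 : before B C ->
  (if A == A1 :|: A2 then
     (if [&& A1 \subset B, A2 \subset C & (#|A1| + #|A2| == k)%N] then PP (A1 :|: A2) c else 0)
   else 0) =
  (if A2 == A :&: C then (if A1 == A :&: B then
     (if (A \subset B :|: C) && (#|A| == k) then PP A c else 0) else 0) else 0).
Proof.
move=> bBC.
have [sA1|nsA1] := boolP (A1 \subset B); last first.
  have -> : (A1 == A :&: B) = false by apply/negP => /eqP e; move: nsA1; rewrite e subsetIr.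
  by rewrite /= !if_same.
have [sA2|nsA2] := boolP (A2 \subset C); last first.
  have -> : (A2 == A :&: C) = false by apply/negP => /eqP e; move: nsA2; rewrite e subsetIr.
  by rewrite /= !if_same.
rewrite eq_sym (cond_before A bBC sA1 sA2) /=.
case e1: (A1 == A :&: B); case e2: (A2 == A :&: C); case e3: (A \subset B :|: C) => //=.
have eA : A1 :|: A2 = A by apply/eqP; rewrite (cond_before A bBC sA1 sA2) e1 e2 e3.
by rewrite -eA card_before //; exact: before_sub bBC sA1 sA2.
Qed.

Lemma split_sum B C k A1 A2 (X : Uh m) :
  \sum_(a < k.+1) (if (A1 \subset B) && (#|A1| == a) then
     (if (A2 \subset C) && (#|A2| == k - a)%N then X else 0) else 0) =
  if [&& A1 \subset B, A2 \subset C & (#|A1| + #|A2| == k)%N] then X else 0.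
Proof.
have [hk|hk] := boolP (#|A1| < k.+1)%N.
  rewrite (bigD1 (Ordinal hk)) //= eqxx andbT big1 ?addr0.
    have -> : (#|A2| == k - #|A1|)%N = (#|A1| + #|A2| == k)%N by apply/eqP/eqP; lia.
    by case: (A1 \subset B); case: (A2 \subset C).
  move=> a; rewrite -val_eqE /= => ne.
  by rewrite eq_sym (negbTE ne) andbF.
rewrite big1.
  have -> : (#|A1| + #|A2| == k)%N = false by apply/eqP; lia.
  by rewrite !andbF.
move=> a _; have -> : (#|A1| == a) = false by apply/eqP; have := ltn_ord a; lia.
by rewrite andbF.
Qed.

Lemma v_split B C k c : before B C ->
  v (B :|: C) k c = \sum_(a < k.+1) uh_mul (v B a (c + (k - a))) (v C (k - a) c).
Proof.
move=> bBC.
pose X A1 A2 := if [&& A1 \subset B, A2 \subset C & (#|A1| + #|A2| == k)%N]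
                then PP (A1 :|: A2) c else 0.
transitivity (\sum_(A1 : {set 'I_m}) \sum_(A2 : {set 'I_m}) X A1 A2).
  transitivity (\sum_(A1 : {set 'I_m}) \sum_(A2 : {set 'I_m}) \sum_(A : {set 'I_m})
                  (if A == A1 :|: A2 then X A1 A2 else 0)); last first.
    by apply: eq_bigr => A1 _; apply: eq_bigr => A2 _; rewrite big_ifeqG.
  rewrite exchange_big /=; under eq_bigr => A2 _ do rewrite exchange_big /=.
  rewrite exchange_big /= /v big_mkcond /=; apply: eq_bigr => A _.
  rewrite exchange_big /=.
  under eq_bigr => A1 _ do under eq_bigr => A2 _ do rewrite /X (split_point k c A A1 A2 bBC).
  by under eq_bigr => A1 _ do rewrite big_ifeqG; rewrite big_ifeqG.
symmetry.
transitivity (\sum_(a < k.+1) \sum_(A1 : {set 'I_m}) \sum_(A2 : {set 'I_m})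
   (if (A1 \subset B) && (#|A1| == a) then
     (if (A2 \subset C) && (#|A2| == k - a)%N then PP (A1 :|: A2) c else 0) else 0)).
  apply: eq_bigr => a _; rewrite /v uh_mul_suml big_mkcond; apply: eq_bigr => A1 _.
  case: ifP => [/andP[sA1 _]|_]; last by rewrite big1.
  rewrite uh_mul_sumr big_mkcond; apply: eq_bigr => A2 _.
  case: ifP => [/andP[sA2 /eqP <-]|_]; last by [].
  exact: PP_union bBC sA1 sA2.
rewrite exchange_big /=; apply: eq_bigr => A1 _.
rewrite exchange_big /=; apply: eq_bigr => A2 _.
exact: split_sum.
Qed.


Lemma sgnD c e : sgn (c + e) = ((-1) ^+ c : algC) *: sgn e.
Proof. by rewrite /sgn scalerA exprD. Qed.

Lemma v_parity I k c U : v I k c U = ((-1) ^+ (c * #|U|) : algC) *: v I k 0 U.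
Proof.
rewrite /v !sum_ffunE scaler_sumr; apply: eq_bigr => A _.
rewrite !PP_coef; case: ifP => sUA; last by rewrite scaler0.
rewrite (eq_bigr (fun i => (if i \in U then ((-1) ^+ c : algC) else 1) *:
                  (if i \in U then sgn (0 + cnt A i) else 'X_i))); last first.
  by move=> i _; case: ifP => _; rewrite ?scale1r // add0n sgnD.
rewrite scaler_prod; congr (_ *: _).
rewrite -big_mkcondr prodr_const exprM; congr (_ ^+ _).
apply: eq_card => i; rewrite unfold_in /=; case: (boolP (i \in U)) => iU; rewrite ?andbF ?andbT //.
exact: (subsetP sUA).
Qed.

Lemma half_double (x : {mpoly algC[m]}) : 2^-1 *: (x + x) = x.
Proof.
rewrite -[in X in _ *: X](scale1r x) -scalerDl scalerA.
have -> : (2^-1 * (1 + 1) : algC) = 1 by rewrite -mulr2n mulVf // pnatr_eq0.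
by rewrite scale1r.
Qed.

Lemma sign_oddU c (U : {set 'I_m}) :
  ((-1) ^+ (c * #|U|) : algC) = if odd #|U| then (-1) ^+ c else 1.
Proof.
rewrite -signr_odd oddM; case: (odd #|U|); rewrite ?andbT ?andbF ?signr_odd //.
Qed.

Lemma v_even I k : uh_even (v I k 0) = 2^-1 *: (v I k 0 + v I k 1).
Proof.
apply/ffunP => U; rewrite !ffunE (v_parity _ _ 1) sign_oddU expr1.
case: ifP => _; first by rewrite scaleN1r subrr scaler0.
by rewrite scale1r half_double.
Qed.

Lemma v_odd I k : uh_odd (v I k 0) = 2^-1 *: (v I k 0 - v I k 1).
Proof.
apply/ffunP => U; rewrite !ffunE (v_parity _ _ 1) sign_oddU expr1.
case: ifP => _; last by rewrite scale1r subrr scaler0.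
by rewrite scaleN1r opprK half_double.
Qed.

Lemma v_c I k c : v I k c = uh_even (v I k 0) + ((-1) ^+ c : algC) *: uh_odd (v I k 0).
Proof.
apply/ffunP => U; rewrite !ffunE v_parity sign_oddU.
by case: ifP => _; rewrite ?scaler0 ?addr0 ?add0r ?scale1r.
Qed.

End Basic.

Lemma mod_id (R : comPzRingType) (V : lmodType R) (P A B C : V) (s : R) : s * s = 1 ->
  P + s *: A + ((-s) *: B + (-s) *: (s *: C)) = (P - C) - s *: (B - A).
Proof.
move=> hs; rewrite scalerA mulNr hs scaleN1r scaleNr scalerBr opprB.
by rewrite [RHS]addrACA [- C + _]addrC.
Qed.

Section Small.
Variable m : nat.

Lemma v_set0 b c : v (set0 : {set 'I_m}) b c = (b == 0)%:R *: uh_one m.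
Proof.
rewrite /v; case: b => [|b].
  rewrite (eq_bigl (fun A => A == set0)) => [|A]; last first.
    by rewrite subset0; case: (A =P set0) => [->|]; rewrite ?cards0.
  by rewrite big_pred1_eq /PP enum_set0 /= scale1r.
rewrite big1 ?scale0r // => A; rewrite subset0 => /andP [/eqP -> ].
by rewrite cards0.
Qed.

Lemma v_set1_0 (i : 'I_m) c : v [set i] 0 c = uh_one m.
Proof.
rewrite /v (eq_bigl (fun A => A == set0)) => [|A]; last first.
  rewrite cards_eq0; case: (A =P set0) => [->|]; by rewrite ?sub0set ?andbF.
by rewrite big_pred1_eq /PP enum_set0.
Qed.

Lemma v_set1_1 (i : 'I_m) c : v [set i] 1 c = uh_x i + ((-1) ^+ c : algC) *: uh_xi i.
Proof.
rewrite /v (eq_bigl (fun A => A == [set i])) => [|A]; last first.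
  rewrite subset1; case: (A =P [set i]) => [->|] /=; first by rewrite cards1.
  by case: (A =P set0) => [->|] //=; rewrite cards0.
rewrite big_pred1_eq /PP enum_set1 /= uh_mulr1 /fac.
suff -> : cnt [set i] i = 0%N by rewrite addn0.
rewrite /cnt; apply/eqP; rewrite cards_eq0; apply/eqP/setP => x; rewrite !inE.
by case: (x =P i) => [->|]; rewrite ?ltnn.
Qed.

Lemma v_set1_big (i : 'I_m) a c : (1 < a)%N -> v [set i] a c = 0.
Proof.
move=> ha; rewrite /v big1 // => A /andP [sA /eqP cA]; exfalso.
by have := subset_leq_card sA; rewrite cards1 cA; lia.
Qed.

Lemma v_blk (i0 i1 : 'I_m) b c : (i0 < i1)%N ->
  let s := ((-1) ^+ c : algC) in
  v ([set i0] :|: [set i1]) b c =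
  if b == 0%N then uh_one m
  else if b == 1%N then (uh_x i0 + uh_x i1) + s *: (uh_xi i0 + uh_xi i1)
  else if b == 2%N then (uh_mul (uh_x i0) (uh_x i1) - uh_mul (uh_xi i0) (uh_xi i1))
                        - s *: (uh_mul (uh_x i1) (uh_xi i0) - uh_mul (uh_x i0) (uh_xi i1))
  else 0.
Proof.
move=> h01 s.
have bef : before [set i0] [set i1] by move=> x y; rewrite !inE => /eqP -> /eqP ->.
rewrite v_split //.
case: b => [|[|[|b]]] /=.
- by rewrite big_ord1 /= !v_set1_0 uh_mul1r.
- rewrite !big_ord_recl big_ord0 /= addr0 subn0 subnn addn0 v_set1_0 uh_mul1r.
  rewrite !v_set1_1 v_set1_0 uh_mulr1 scalerDr.
  by rewrite [RHS]addrACA addrC.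
- rewrite !big_ord_recl big_ord0 /= addr0.
  rewrite (@v_set1_big _ 2) // (@v_set1_big _ 2) // uh_mul0r uh_mul0l add0r addr0.
  rewrite !v_set1_1 uh_mulDl !uh_mulDr !uh_mulZl !uh_mulZr.
  rewrite (uh_mul_comm0 (uh_xi i0) (@supp_x m i1 set0)).
  have -> : ((-1) ^+ (c + 1) : algC) = - s by rewrite addn1 exprS mulN1r.
  rewrite -/s mod_id //.
  by rewrite /s -exprD -signr_odd oddD addbb.
- rewrite big1 // => x _.
  have [hx|hx] := leqP x 1.
    by rewrite (@v_set1_big _ (b.+3 - x)) ?uh_mul0r //; lia.
  by rewrite (@v_set1_big _ x) ?uh_mul0l.
Qed.

End Small.

Lemma uh_xiN_val m (j : 'I_m) : uh_xiN m (nat_of_ord j) = uh_xi j.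
Proof. by rewrite /uh_xiN valK. Qed.
Lemma uh_xN_val m (j : 'I_m) : uh_xN m (nat_of_ord j) = uh_x j.
Proof. by rewrite /uh_xN valK. Qed.

Lemma mcoeff0_prodX m (A : {set 'I_m}) :
  mcoeff 0%MM (\prod_(i in A) 'X_i : {mpoly algC[m]}) = (A == set0)%:R.
Proof.
rewrite mprodXE mcoeffX -mdeg_eq0 mdeg_sum.
rewrite (eq_bigr (fun _ => 1%N)) => [|i _]; last exact: mdeg1.
by rewrite sum1_card cards_eq0.
Qed.

Lemma v_coef0 m (I : {set 'I_m}) x : mcoeff 0%MM (v I x 0 set0) = (x == 0)%:R.
Proof.
rewrite /v sum_ffunE raddf_sum.
rewrite (eq_bigr (fun A => (A == set0)%:R)) => [|A _]; last first.
  rewrite PP_coef sub0set (eq_bigr (fun i => 'X_i)) => [|i _]; last by rewrite inE.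
  exact: mcoeff0_prodX.
case: x => [|x].
  rewrite (eq_bigl (fun A => A == set0)) => [|A]; last first.
    by rewrite cards_eq0; case: (A =P set0) => [->|]; rewrite ?sub0set ?andbF.
  by rewrite big_pred1_eq eqxx.
rewrite big1 // => A /andP [_ /eqP cA].
by have -> : (A == set0) = false by rewrite -cards_eq0 cA.
Qed.

Lemma esym_coef p (t : 'I_p -> algC) k :
  (\prod_(i < p) (1 + (t i)%:P * 'X^2))`_k =
  (if odd k || (2 * p < k)%N then 0 else esym_t t k./2).
Proof.
under eq_bigr => i _ do rewrite addrC.
rewrite bigA_distr coef_sum.
rewrite (eq_bigr (fun J : {set 'I_p} => (\prod_(i in J) t i) * (k == 2 * #|J|)%N%:R)); last first.
  move=> J _; rewrite -big_mkcond /= big_split /= -rmorph_prod prodr_const -exprM.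
  by rewrite coefCM coefXn.
have cJ (J : {set 'I_p}) : (#|J| <= p)%N by rewrite -[X in (_ <= X)%N](card_ord p) max_card.
case: ifP => [h|h].
  rewrite big1 // => J _; suff -> : (k == 2 * #|J|)%N = false by rewrite mulr0.
  apply/negP => /eqP ek; move: h; rewrite ek oddM /= => h.
  by move: h; rewrite ltn_mul2l /= ltnNge cJ.
rewrite /esym_t [RHS]big_mkcond; apply: eq_big => // J _.
have ek := odd_double_half k; move/norP: h => [ok _]; rewrite (negbTE ok) add0n in ek.
have -> : (k == 2 * #|J|)%N = (#|J| == k./2) by apply/eqP/eqP; lia.
by case: ifP; rewrite ?mulr1 ?mulr0.
Qed.

Section Main.
Variables (r p n : nat) (t : 'I_p -> algC) (chi : Uh n -> algC).
Hypothesis hn : (r + 2 * p)%N = n.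
Hypothesis hchi : S_t0_char r t chi.

Local Notation G := (@blockW_gens n r p).
Local Notation SA := (subalg G).

Lemma chi1 : chi (uh_one n) = 1.
Proof. by case: hchi => [[]]. Qed.
Lemma chiD a b : SA a -> SA b -> chi (a + b) = chi a + chi b.
Proof. by case: hchi => [[_ h _ _] _ _ _]; apply: h. Qed.
Lemma chiZ c a : SA a -> chi (c *: a) = c * chi a.
Proof. by case: hchi => [[_ _ h _] _ _ _]; apply: h. Qed.
Lemma chiM a b : SA a -> SA b -> chi (uh_mul a b) = chi a * chi b.
Proof. by case: hchi => [[_ _ _ h] _ _ _]; apply: h. Qed.

Lemma SA1 : SA (uh_one n).
Proof. exact: sa_one. Qed.
Lemma SA0 : SA 0.
Proof. by have := sa_scale 0 SA1; rewrite scale0r. Qed.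
Lemma chi0 : chi 0 = 0.
Proof. by have := chiZ 0 SA1; rewrite scale0r mul0r. Qed.

Lemma SA_sum (I : Type) (rr : seq I) (P : pred I) (F : I -> Uh n) (g : I -> algC) :
  (forall i, P i -> SA (F i) /\ chi (F i) = g i) ->
  SA (\sum_(i <- rr | P i) F i) /\ chi (\sum_(i <- rr | P i) F i) = \sum_(i <- rr | P i) g i.
Proof.
move=> h; elim: rr => [|i rr [s1 c1]]; first by rewrite !big_nil; split; [exact: SA0 | exact: chi0].
rewrite !big_cons; case: ifP => Pi //; have [s2 c2] := h i Pi.
by split; [exact: sa_add | rewrite chiD // c1 c2].
Qed.

Lemma SA_sum' (I : Type) (rr : seq I) (P : pred I) (F : I -> Uh n) (g : I -> algC) y :
  (forall i, P i -> SA (F i) /\ chi (F i) = g i) -> \sum_(i <- rr | P i) g i = y ->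
  SA (\sum_(i <- rr | P i) F i) /\ chi (\sum_(i <- rr | P i) F i) = y.
Proof. by move=> h <-; apply: SA_sum. Qed.

Lemma o0_lt (j : 'I_p) : (r + 2 * j < n)%N.
Proof. by rewrite -hn; have := ltn_ord j; lia. Qed.
Lemma o1_lt (j : 'I_p) : ((r + 2 * j).+1 < n)%N.
Proof. by rewrite -hn; have := ltn_ord j; lia. Qed.
Definition o0 j : 'I_n := Ordinal (o0_lt j).
Definition o1 j : 'I_n := Ordinal (o1_lt j).
Definition blk j := [set o0 j] :|: [set o1 j].
Definition Vs (j : nat) : {set 'I_n} := [set i : 'I_n | (r + 2 * j <= i)%N].
Definition W (j : 'I_p) : {poly algC} := 1 + (t j)%:P * 'X^2.
Definition Q (j : nat) : {poly algC} := \prod_(i < p | (j <= i)%N) W i.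

Lemma blk_val (j : 'I_p) b c : SA (v (blk j) b c) /\ chi (v (blk j) b c) = (W j)`_b.
Proof.
have lt01 : (o0 j < o1 j)%N by rewrite /= ltnSn.
have gen : [/\ G (phi0 n (r + 2 * j)), G (phi1 n (r + 2 * j)), G (z0 n (r + 2 * j))
              & G (z1' n (r + 2 * j))].
  by split; right; exists j; [apply: Or41 | apply: Or42 | apply: Or43 | apply: Or44].
case: gen => g0 g1 g2 g3.
have [c0 c1 c2 c3] : [/\ chi (phi0 n (r + 2 * j)) = 0, chi (phi1 n (r + 2 * j)) = 0,
     chi (z0 n (r + 2 * j)) = 0 & chi (z1' n (r + 2 * j)) = t j].
  by case: hchi => _ _ _ /(_ j).
have eph0 : phi0 n (r + 2 * j) = uh_xi (o0 j) + uh_xi (o1 j).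
  by rewrite /phi0 -(uh_xiN_val (o0 j)) -(uh_xiN_val (o1 j)).
have ez0 : z0 n (r + 2 * j) = uh_x (o0 j) + uh_x (o1 j).
  by rewrite /z0 -(uh_xN_val (o0 j)) -(uh_xN_val (o1 j)).
have eph1 : phi1 n (r + 2 * j) = uh_mul (uh_x (o1 j)) (uh_xi (o0 j)) - uh_mul (uh_x (o0 j)) (uh_xi (o1 j)).
  by rewrite /phi1 -(uh_xiN_val (o0 j)) -(uh_xiN_val (o1 j)) -(uh_xN_val (o0 j)) -(uh_xN_val (o1 j)).
have ez1 : z1' n (r + 2 * j) = uh_mul (uh_x (o0 j)) (uh_x (o1 j)) - uh_mul (uh_xi (o0 j)) (uh_xi (o1 j)).
  by rewrite /z1' -(uh_xiN_val (o0 j)) -(uh_xiN_val (o1 j)) -(uh_xN_val (o0 j)) -(uh_xN_val (o1 j)).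
have := @v_blk n (o0 j) (o1 j) b c lt01 => /= ->.
rewrite /W coefD coef1 coefCM coefXn.
case: b => [|[|[|b]]] /=.
- by split; [exact: SA1 | rewrite chi1 mulr0 addr0].
- rewrite -ez0 -eph0.
  have h1 := sa_gen g2; have h2 := sa_scale ((-1) ^+ c) (sa_gen g0).
  split; first exact: sa_add h1 h2.
  by rewrite chiD // chiZ ?c0 ?c2 ?mulr0 ?addr0 //; exact: sa_gen.
- rewrite -ez1 -eph1 -scaleN1r.
  have h1 := sa_gen g3; have h2' := sa_scale ((-1) ^+ c) (sa_gen g1).
  have h2 := sa_scale (-1) h2'.
  split; first exact: sa_add h1 h2.
  by rewrite chiD // chiZ // chiZ ?c1 ?c3 ?mulr0 ?addr0 ?add0r ?mulr1 //; exact: sa_gen.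
- by split; [exact: SA0 | rewrite chi0 mulr0 addr0].
Qed.


Lemma Vs_split (j : 'I_p) : Vs j = blk j :|: Vs j.+1.
Proof.
apply/setP => x; rewrite !inE -!val_eqE /=.
lia.
Qed.

Lemma bef_blk (j : 'I_p) : before (blk j) (Vs j.+1).
Proof.
move=> x y; rewrite !inE -!val_eqE /= => /orP [/eqP -> | /eqP ->] h; lia.
Qed.

Lemma Vs_p : Vs p = set0.
Proof. by apply/setP => x; rewrite !inE; have := ltn_ord x; move: hn; lia. Qed.

Lemma setT_split : [set: 'I_n] = first_vars n r :|: Vs 0.
Proof.
apply/setP => x; rewrite !inE muln0 addn0.
by case: (ltnP x r).
Qed.

Lemma bef_B0 : before (first_vars n r) (Vs 0).
Proof. move=> x y; rewrite !inE muln0 addn0; lia. Qed.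

Lemma Q_p : Q p = 1.
Proof. by rewrite /Q big_pred0 // => i; rewrite leqNgt ltn_ord. Qed.

Lemma Q_rec (j : 'I_p) : Q j = W j * Q j.+1.
Proof.
rewrite /Q (bigD1 j) //=; congr (_ * _); apply: eq_bigl => i.
rewrite -val_eqE /=; lia.
Qed.

Lemma Vs_val d : (d <= p)%N -> forall b c,
  SA (v (Vs (p - d)) b c) /\ chi (v (Vs (p - d)) b c) = (Q (p - d))`_b.
Proof.
elim: d => [_|d IH hd] b c.
  rewrite subn0 Vs_p v_set0 Q_p coef1; split; first exact/sa_scale/sa_one.
  by rewrite chiZ ?chi1 ?mulr1 //; exact: sa_one.
have hj : (p - d.+1 < p)%N by lia.
pose j := Ordinal hj.
have e : (p - d = j.+1)%N by rewrite /=; lia.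
have IH' := IH (ltnW hd).
rewrite (_ : (p - d.+1 = j)%N) // Vs_split v_split; last exact: bef_blk.
rewrite Q_rec coefM -e.
apply: SA_sum => x _.
have [s1 c1] := blk_val j x (c + (b - x))%N; have [s2 c2] := IH' (b - x)%N c.
by split; [exact: sa_mul s1 s2 | rewrite chiM // c1 c2].
Qed.

Lemma B0_val x c : SA (v (first_vars n r) x c) /\ chi (v (first_vars n r) x c) = (x == 0)%:R.
Proof.
rewrite v_c -u_on_v.
have gE : G (uh_even (u_on (first_vars n r) x)) by left; exists x; left.
have gO : G (uh_odd (u_on (first_vars n r) x)) by left; exists x; right.
split; first by apply: sa_add; [exact: sa_gen | apply: sa_scale; exact: sa_gen].
rewrite chiD; [|exact: sa_gen|apply: sa_scale; exact: sa_gen].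
rewrite chiZ; last exact: sa_gen.
case: hchi => _ hE hO _; rewrite hE hO !ffunE cards0 /= raddf0 mulr0 addr0.
by rewrite u_on_v v_coef0.
Qed.

Lemma top_val k c : SA (v [set: 'I_n] k c) /\ chi (v [set: 'I_n] k c) = (Q 0)`_k.
Proof.
rewrite setT_split v_split; last exact: bef_B0.
have := Vs_val (leqnn p); rewrite subnn => hV.
apply: (SA_sum' (g := fun x : 'I_k.+1 => (nat_of_ord x == 0%N)%:R * (Q 0)`_(k - x)%N)); last first.
  rewrite big_ord_recl /= subn0 mul1r big1 ?addr0 // => i _.
  by rewrite mul0r.
move=> x _; have [s1 c1] := B0_val x (c + (k - x))%N; have [s2 c2] := hV (k - x)%N c.
by split; [exact: sa_mul s1 s2 | rewrite chiM // c1 c2].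
Qed.

End Main.

Unset Implicit Arguments. Set Strict Implicit.

Theorem lemma4p6 (r p n : nat) (t : 'I_p -> algC) (chi : Uh n -> algC) :
  (r + 2 * p)%N = n ->
  (forall i : 'I_p, t i != 0) ->
  @S_t0_char n r p t chi ->
  forall k : nat, (1 <= k <= n)%N ->
    chi (@u1 n k) = 0 /\
    chi (@u0 n k) = (if odd k || (2 * p < k)%N then 0 else @esym_t p t k./2).
Proof.
move=> hn _ hchi k _.
have [s0 c0] := top_val hn hchi k 0; have [s1 c1] := top_val hn hchi k 1.
have hZ := chiZ hchi; have hD := chiD hchi.
rewrite /u1 /u0 u_on_v v_odd v_even -scaleN1r.
have sN : subalg (blockW_gens r p) (-1 *: v [set: 'I_n] k 1) by apply: sa_scale.
split.
  rewrite hZ; last by apply: sa_add.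
  by rewrite hD // hZ // c0 c1 mulN1r subrr mulr0.
rewrite hZ; last by apply: sa_add.
rewrite hD // c0 c1 -mulr2n -[X in 2^-1 * X]mulr_natr mulrCA mulVf ?mulr1 ?pnatr_eq0 //.
rewrite /Q (eq_bigl (fun _ => true)) //; exact: esym_coef.
Qed.
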